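(* Let $(P_n)_{n\ge0}$ be defined by $P_0(m)=m$ and $P_{n+1}(m)=P_n(m+1)+\sum_{i=0}^{n}P_i(m)P_{n-i}(m)$, and write $P_n(m)=\sum_{i=1}^{n+2}p^{(i)}_n m^{n+2-i}$, with $p^{(i)}_n=0$ for $i>n+2$. For every integer $i\ge 1$ let $a_i(z)=\sum_{n\ge 0}p^{(i)}_n z^n$ (a formal power series). Then the following equations hold: \[a_1=z a_1^2+1,\qquad a_1(0)=1,\] \[a_2=z a_1+2z a_1 a_2,\] and for every $i>2$, \[a_i=z^{i-1}\frac{a_1^{(i-2)}}{(i-2)!}+z^{i-2}\frac{a_1^{(i-3)}}{(i-3)!}+z^{i-2}\frac{a_2^{(i-3)}}{(i-3)!} +z\sum_{j=1}^{i-3}\sum_{k=0}^{i-3-j}(-1)^k\binom{k+j-1}{j-1}z^{i-3-j-k}\frac{a_{j+2}^{(i-3-j-k)}}{(i-3-j-k)!} +z\sum_{j=1}^{i}a_j\,a_{i-j+1}.\]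
   Context: $f^{(k)}$ denotes the $k$-th (formal) derivative of $f$ with respect to $z$, $f^{(0)}=f$. The coefficient $p^{(i)}_n$ is the $i$-th leading coefficient of $P_n$ (which has degree $n+1$); equivalently $p^{(i)}_n=c_{n,n+2-i}$, the number of $(n+2-i)$-contexts of size $n$. *)

(* Defs.v *)
From HB Require Import structures.
From mathcomp Require Import all_boot all_order all_algebra.
Set Implicit Arguments. Unset Strict Implicit. Unset Printing Implicit Defensive.
Import Order.TTheory GRing.Theory Num.Theory.
Local Open Scope ring_scope.

Definition Pnext (s : seq {poly int}) : {poly int} :=
  (last 0 s) \Po ('X + 1) + \sum_(i < size s) s`_i * s`_(size s - 1 - i).

Fixpoint Pseq (n : nat) : seq {poly int} :=
  match n with
  | 0 => [:: 'X]
  | n'.+1 => rcons (Pseq n') (Pnext (Pseq n'))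
  end.

Definition P (n : nat) : {poly int} := nth 0 (Pseq n) n.

Definition pcoef (i n : nat) : int :=
  if (1 <= i <= n.+2)%N then (P n)`_(n.+2 - i) else 0.

(* Formal power series over rat, as coefficient sequences. *)
Definition fps := nat -> rat.

Definition sadd (f g : fps) : fps := fun n => f n + g n.
Definition smul (f g : fps) : fps := fun n => \sum_(k < n.+1) f k * g (n - k)%N.
Definition sscale (c : rat) (f : fps) : fps := fun n => c * f n.
Definition sconst (c : rat) : fps := fun n => if n == 0%N then c else 0.
(* multiplication by z^k *)
Definition sXk (k : nat) (f : fps) : fps := fun n => if (k <= n)%N then f (n - k)%N else 0.
Definition sderiv (f : fps) : fps := fun n => f n.+1 * n.+1%:R.
Definition sderivn (k : nat) (f : fps) : fps := iter k sderiv f.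
(* z^e * f^{(d)} / d! *)
Definition term (e d : nat) (f : fps) : fps :=
  sXk e (sscale (d`!%:R)^-1 (sderivn d f)).

Definition a (i : nat) : fps := fun n => (pcoef i n)%:~R.

(* Main.v *)
Require Import Defs.
From HB Require Import structures.
From mathcomp Require Import all_boot all_order all_algebra.
From mathcomp Require Import zify ring lra.
Import Order.TTheory GRing.Theory Num.Theory.
Local Open Scope ring_scope.

Lemma size_Pseq n : size (Pseq n) = n.+1.
Proof. by elim: n => //= n IH; rewrite size_rcons IH. Qed.

Lemma nth_Pseq n k : (k <= n)%N -> nth 0 (Pseq n) k = P k.
Proof.
elim: n => [|n IH] hk; first by move: hk; rewrite leqn0 => /eqP ->.
rewrite /= nth_rcons size_Pseq.
case: ltnP => hk2; first by apply: IH.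
have -> : k = n.+1 by apply/eqP; rewrite eqn_leq hk.
by rewrite eqxx /P /= nth_rcons size_Pseq ltnn eqxx.
Qed.

Lemma P_rec n : P n.+1 = P n \Po ('X + 1) + \sum_(i < n.+1) P i * P (n - i).
Proof.
rewrite {1}/P /= nth_rcons size_Pseq ltnn eqxx /Pnext size_Pseq.
rewrite -nth_last size_Pseq /= nth_Pseq //.
congr (_ + _); apply: eq_bigr => i _.
rewrite !nth_Pseq //; first by rewrite subn1.
  by rewrite subn1 leq_subr.
by rewrite -ltnS.
Qed.

Lemma size_P n : (size (P n) <= n.+2)%N.
Proof.
suff H : forall m k, (k <= m)%N -> (size (P k) <= k.+2)%N by exact: (H n n).
elim=> [|m IH] k hk.
  by move: hk; rewrite leqn0 => /eqP ->; rewrite /P /= size_polyX.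
case: (ltnP k m.+1) => hk2; first by apply: IH.
have -> : k = m.+1 by apply/eqP; rewrite eqn_leq hk.
rewrite P_rec (leq_trans (size_polyD _ _)) // geq_max; apply/andP; split.
  rewrite (leq_trans (size_comp_poly_leq _ _)) //.
  have h1 : size ('X + 1 : {poly int}) = 2 by rewrite -polyC1 size_XaddC.
  rewrite h1 muln1; have := IH m (leqnn m); lia.
rewrite (leq_trans (size_sum _ _ _)) //; apply/bigmax_leqP => i _.
rewrite (leq_trans (size_polyMleq _ _)) //.
have := IH i (ltnSE (ltn_ord i)); have := IH (m - i)%N (leq_subr _ _).
have := ltn_ord i; lia.
Qed.

Lemma coef_P_big n u : (n.+2 <= u)%N -> (P n)`_u = 0.
Proof. move=> h; apply: nth_default; exact: leq_trans (size_P n) h. Qed.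

Lemma coef_XaddC_exp v u : ((('X + 1 : {poly int}) ^+ v)`_u) = ('C(v, u))%:R.
Proof.
elim: v u => [|v IH] u.
  by rewrite expr0 coefC; case: u.
rewrite exprSr mulrDr mulr1 coefD coefMX.
case: u => [|u] /=; first by rewrite add0r IH !bin0.
by rewrite !IH binS natrD addrC.
Qed.

Lemma coef_shift (p : {poly int}) u : (p \Po ('X + 1))`_u = \sum_(v < size p) p`_v * ('C(v, u))%:R.
Proof. by rewrite coef_comp_poly; apply: eq_bigr => v _; rewrite coef_XaddC_exp. Qed.

Lemma sum_trunc {R : nmodType} {n m} {F : nat -> R} :
  (forall a, (m <= a)%N -> F a = 0) -> (m <= n)%N ->
  \sum_(0 <= a < n) F a = \sum_(0 <= a < m) F a.
Proof.
move=> H hmn; rewrite (big_cat_nat (leq0n m) hmn) /=.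
have -> : \sum_(m <= a < n) F a = 0.
  by rewrite big_nat_cond big1 // => a /andP[/andP[ha _] _]; exact: H.
by rewrite addr0.
Qed.

Lemma sum_trunc2 {R : nmodType} n1 n2 (F : nat -> R) :
  (forall a, (minn n1 n2 <= a)%N -> F a = 0) ->
  \sum_(0 <= a < n1) F a = \sum_(0 <= a < n2) F a.
Proof.
move=> H; by rewrite (sum_trunc H (geq_minl _ _)) (sum_trunc H (geq_minr _ _)).
Qed.

Lemma pcoef0 n : pcoef 0 n = 0. Proof. by []. Qed.
Lemma pcoef_big i n : (n.+2 < i)%N -> pcoef i n = 0.
Proof. by move=> h; rewrite /pcoef; case: ifP => //; lia. Qed.
Lemma pcoef_q i n : (1 <= i)%N -> (i <= n.+2)%N -> pcoef i n = (P n)`_(n.+2 - i).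
Proof. by move=> h1 h2; rewrite /pcoef h1 h2. Qed.
Lemma q_pcoef n u : (u <= n.+1)%N -> (P n)`_u = pcoef (n.+2 - u) n.
Proof. by move=> h; rewrite pcoef_q; [congr (_`_ _); lia | lia | lia]. Qed.

Lemma conv_P t s i : (i <= t + s + 3)%N ->
  (P t * P s)`_(t + s + 3 - i) =
  \sum_(1 <= j < i.+1) pcoef j t * pcoef (i.+1 - j) s.
Proof.
move=> hi; set u := (t + s + 3 - i)%N.
set K := (t + s + i + 5)%N.
rewrite coefM -(big_mkord xpredT (fun a => (P t)`_a * (P s)`_(u - a))).
set F := fun a => if (a <= u)%N then (P t)`_a * (P s)`_(u - a) else 0.
have -> : \sum_(0 <= a < u.+1) (P t)`_a * (P s)`_(u - a) = \sum_(0 <= a < K) F a.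
  rewrite (@sum_trunc _ K u.+1 F); last 2 first.
  - by move=> a ha; rewrite /F ifF //; apply/negbTE; rewrite -ltnNge.
  - rewrite /K /u; lia.
  by apply: eq_big_nat => a /andP[_ ha]; rewrite /F -ltnS ha.
set H := fun j => pcoef j t * pcoef (i.+1 - j) s.
have -> : \sum_(1 <= j < i.+1) H j = \sum_(0 <= j < i.+1) H j.
  by rewrite (big_ltn (ltn0Sn i)) /H pcoef0 mul0r add0r.
rewrite [RHS](sum_trunc2 _ (t.+3)); last first.
  move=> j hj; rewrite /H; case: (leqP j (t.+2)) => hj2.
    have -> : (i.+1 - j = 0)%N by lia.
    by rewrite pcoef0 mulr0.
  by rewrite pcoef_big // mul0r.
rewrite [RHS]big_nat_rev /= add0n.
rewrite -(@sum_trunc _ K t.+3 (fun a => H (t.+3 - a.+1)%N)); last 2 first.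
- move=> a ha; have -> : (t.+3 - a.+1 = 0)%N by lia.
  by rewrite /H pcoef0 mul0r.
- rewrite /K; lia.
apply: eq_big_nat => a /andP[_ haK].
rewrite /F /H.
case: (leqP a t.+1) => hat; last first.
  have -> : (t.+3 - a.+1 = 0)%N by lia.
  rewrite pcoef0 mul0r; case: ifP => // _.
  by rewrite coef_P_big // mul0r.
rewrite (pcoef_q (t.+3 - a.+1)); try lia.
have -> : (t.+2 - (t.+3 - a.+1) = a)%N by lia.
case: ifP => hau.
  case: (leqP (u - a) s.+1) => hsu.
    by rewrite (q_pcoef s (u - a)) //; congr (_ * pcoef _ _); rewrite /u; lia.
  rewrite (coef_P_big s (u - a)) // mulr0.
  have -> : (i.+1 - (t.+3 - a.+1) = 0)%N by rewrite /u in hsu; lia.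
  by rewrite pcoef0 mulr0.
rewrite pcoef_big ?mulr0 //; move: hau; rewrite /u; lia.
Qed.

Lemma shift_P N i : (1 <= i)%N -> (i <= N + 3)%N ->
  ((P N) \Po ('X + 1))`_(N + 3 - i) =
  \sum_(1 <= l < i) ('C(N.+2 - l, i.-1 - l))%:R * pcoef l N.
Proof.
move=> h1 h2.
rewrite coef_shift -(big_mkord xpredT (fun v => (P N)`_v * ('C(v, N + 3 - i))%:R)).
rewrite (@sum_trunc2 _ (size (P N)) N.+3); last first.
  move=> v; rewrite (minn_idPl (leq_trans (size_P N) (leqnSn _))) => hv.
  by rewrite nth_default // mul0r.
rewrite (big_nat_widenl 1 0) // (big_nat_widen 0 i N.+3); last by lia.
rewrite big_mkcond [RHS]big_nat_rev /= add0n.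
apply: eq_big_nat => v /andP[_ hv].
case: ifP => /andP.
  move=> [c1 c2]; rewrite (pcoef_q (N.+3 - v.+1)); try lia.
  have -> : (N.+2 - (N.+3 - v.+1) = v)%N by lia.
  have -> : (i.-1 - (N.+3 - v.+1) = v - (N + 3 - i))%N by lia.
  rewrite bin_sub; [exact: mulrC | lia].
move=> hc; case: (leqP v N.+1) => hv2.
  by rewrite bin_small ?mulr0 //; lia.
by rewrite coef_P_big ?mul0r //.
Qed.

Lemma pcoef_rec N i : (1 <= i)%N -> pcoef i N.+1 =
  \sum_(1 <= l < i) ('C(N.+2 - l, i.-1 - l))%:R * pcoef l N
  + \sum_(1 <= j < i.+1) \sum_(0 <= t < N.+1) pcoef j t * pcoef (i.+1 - j) (N - t).
Proof.
move=> h1; case: (leqP i (N + 3)) => h2.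
  rewrite pcoef_q; try lia.
  have -> : (N.+3 - i = N + 3 - i)%N by lia.
  rewrite P_rec coefD shift_P // coef_sum; congr (_ + _).
  rewrite -(big_mkord xpredT (fun t => (P t * P (N - t))`_(N + 3 - i))).
  rewrite exchange_big_nat /=; apply: eq_big_nat => t /andP[_ ht].
  have -> : (N + 3 - i = t + (N - t) + 3 - i)%N by lia.
  rewrite conv_P //; lia.
rewrite pcoef_big; last by lia.
rewrite [X in X + _]big_nat_cond [X in _ + X]big_nat_cond !big1 ?addr0 //.
  move=> j /andP[/andP[hj1 hj2] _]; rewrite big_nat_cond big1 // => t /andP[/andP[_ ht] _].
  case: (leqP j t.+2) => hjt; last by rewrite pcoef_big ?mul0r.
  by rewrite (pcoef_big (i.+1 - j)) ?mulr0 //; lia.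
move=> l /andP[/andP[hl1 hl2] _].
case: (leqP l N.+2) => hl; last by rewrite pcoef_big ?mulr0.
by rewrite bin_small ?mul0r //; lia.
Qed.

Definition Sb (J X d : nat) : rat :=
  \sum_(0 <= k < d.+1) (-1) ^+ k * ('C(k + J, J))%:R * ('C(X, d - k))%:R.

Lemma Sb_rec J X d : Sb J.+1 X d.+1 = Sb J X d.+1 - Sb J.+1 X d.
Proof.
rewrite /Sb (big_nat_recl d.+1) // (big_nat_recl d.+1) //= !add0n !binn !subn0 !expr0 !mul1r.
rewrite -addrA; congr (_ + _).
rewrite -sumrB; apply: eq_bigr => k _.
rewrite !subSS !addSn !addnS binS natrD exprS.
have -> : (k + J).+1 = (k + J.+1)%N by rewrite addnS.
ring.
Qed.

Lemma Sb_J0 M d : Sb 0 M.+1 d = ('C(M, d))%:R.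
Proof.
elim: d => [|d IH]; first by rewrite /Sb big_nat1 !bin0 expr0 !mul1r.
have -> : Sb 0 M.+1 d.+1 = ('C(M.+1, d.+1))%:R - Sb 0 M.+1 d.
  rewrite /Sb (big_nat_recl d.+1) //= !subn0 !addn0 !bin0 !expr0 !mul1r.
  congr (_ + _); rewrite -sumrN; apply: eq_bigr => k _.
  by rewrite !addn0 !bin0 subSS exprS; ring.
by rewrite IH binS natrD addrK.
Qed.

Lemma Sb_eq J M d : Sb J (M + J.+1) d = ('C(M, d))%:R.
Proof.
elim: J M d => [|J IH] M d; first by rewrite addn1 Sb_J0.
elim: d => [|d IHd]; first by rewrite /Sb big_nat1 !bin0 binn expr0 !mul1r.
rewrite Sb_rec IHd.
have -> : (M + J.+2 = M.+1 + J.+1)%N by lia.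
by rewrite IH binS natrD addrK.
Qed.

Lemma a_rec N i : (1 <= i)%N -> a i N.+1 =
  \sum_(1 <= l < i) ('C(N.+2 - l, i.-1 - l))%:R * a l N
  + \sum_(1 <= j < i.+1) smul (a j) (a (i.+1 - j)) N.
Proof.
move=> h1; rewrite /a pcoef_rec // rmorphD !rmorph_sum /=; congr (_ + _).
  by apply: eq_bigr => l _; rewrite rmorphM rmorph_nat.
apply: eq_bigr => j _; rewrite rmorph_sum big_mkord /smul.
by apply: eq_bigr => t _; rewrite rmorphM.
Qed.

Lemma smulC f g n : smul f g n = smul g f n.
Proof.
rewrite /smul -(big_mkord xpredT (fun k => f k * g (n - k)%N)).
rewrite -(big_mkord xpredT (fun k => g k * f (n - k)%N)) big_nat_rev /=; apply: eq_big_nat => k /andP[_ hk].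
rewrite add0n mulrC; congr (g _ * f _); lia.
Qed.

Lemma sderivn_eq d f m : sderivn d f m = f (m + d)%N * ((m + d) ^_ d)%:R.
Proof.
elim: d f m => [|d IH] f m; first by rewrite /sderivn /= addn0 ffactn0 mulr1.
rewrite /sderivn iterSr -/(sderivn d (sderiv f)) IH /sderiv addnS ffactSS natrM mulrA.
by [].
Qed.

Lemma term_dd d f n : term d d f n = ('C(n, d))%:R * f n.
Proof.
rewrite /term /sXk /sscale; case: leqP => h.
  rewrite sderivn_eq subnK // -bin_ffact natrM.
  have hf : (d`!%:R : rat) != 0 by rewrite pnatr_eq0 -lt0n fact_gt0.
  by field.
by rewrite bin_small // mul0r.
Qed.

Lemma term_S e d f n : term e.+1 d f n.+1 = term e d f n.
Proof. by rewrite /term /sXk ltnS subSS. Qed.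

Lemma a_big i n : (n.+2 < i)%N -> a i n = 0.
Proof. by move=> h; rewrite /a pcoef_big. Qed.
Lemma a10 : a 1 0 = 1.
Proof. by rewrite /a pcoef_q //= /P /= coefX. Qed.
Lemma a20 : a 2 0 = 0.
Proof. by rewrite /a pcoef_q //= /P /= coefX. Qed.

From Stdlib Require Import FunctionalExtensionality.

Lemma part1 : a 1 = sadd (sXk 1 (smul (a 1) (a 1))) (sconst 1).
Proof.
apply: functional_extensionality => -[|N].
  by rewrite /sadd /sXk /sconst /= a10 add0r.
rewrite a_rec // big_geq // add0r big_nat1 /sadd /sXk /sconst /= !subn1 addr0.
by [].
Qed.

Lemma part3 : a 2 = sadd (sXk 1 (a 1)) (sscale 2 (sXk 1 (smul (a 1) (a 2)))).
Proof.
apply: functional_extensionality => -[|N]; first by rewrite /sadd /sXk /sscale a20 /= mulr0 addr0.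
rewrite a_rec // big_nat1 (big_ltn (_ : 1 < 3)%N) // big_nat1 /sadd /sXk /sscale /= !subn1 /=.
rewrite bin0 mul1r (smulC (a 2)) (_ : (3 - 2 = 1)%N) //; ring.
Qed.

Lemma inner_id N I j : (1 <= j)%N -> (j <= I)%N ->
  ('C(N.+2 - j.+2, I.+2 - j.+2))%:R * a j.+2 N =
  \sum_(0 <= k < I.+1 - j) ((-1) ^+ k * ('C(k + j - 1, j - 1))%:R
       * term (I - j - k) (I - j - k) (a j.+2) N).
Proof.
move=> hj1 hjI.
case: (leqP j N) => hjN; last first.
  rewrite a_big ?mulr0; last by lia.
  by rewrite big1 // => k _; rewrite term_dd a_big ?mulr0 //; lia.
have := Sb_eq (j - 1) (N - j) (I - j); rewrite /Sb.
have -> : (N - j + (j - 1).+1 = N)%N by lia.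
have -> : (I.+1 - j = (I - j).+1)%N by lia.
rewrite !subSS => <-; rewrite mulr_suml; apply: eq_big_nat => k /andP[_ hk].
rewrite term_dd mulrA.
have -> : (k + j - 1 = k + (j - 1))%N by lia.
by [].
Qed.

Lemma part4 i : (2 < i)%N ->
      a i = fun n =>
        term (i - 1) (i - 2) (a 1) n
        + term (i - 2) (i - 3) (a 1) n
        + term (i - 2) (i - 3) (a 2) n
        + sXk 1 (fun m => \sum_(1 <= j < i - 2) \sum_(0 <= k < i - 2 - j)
              ((-1) ^+ k * ('C(k + j - 1, j - 1))%:R
               * term (i - 3 - j - k) (i - 3 - j - k) (a (j + 2)) m)) n
        + sXk 1 (fun m => \sum_(1 <= j < i.+1) smul (a j) (a (i - j + 1)) m) n.
Proof.
move=> hi; have [I ->] : exists I, i = I.+3 by exists (i - 3)%N; lia.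
have e1 : (I.+3 - 1 = I.+2)%N by lia.
have e2 : (I.+3 - 2 = I.+1)%N by lia.
have e3 : (I.+3 - 3 = I)%N by lia.
rewrite e1 e2 e3.
apply: functional_extensionality => -[|N].
  by rewrite a_big // /term /sXk /=.
rewrite a_rec // !term_S !term_dd /sXk /= !subn1 /=.
rewrite (big_ltn (_ : 1 < I.+3)%N) // (big_ltn (_ : 2 < I.+3)%N) //.
rewrite -[3%N]/(1 + 2)%N big_addn.
have -> : (I.+3 - 2 = I.+1)%N by lia.
have -> : \sum_(1 <= j < I.+4) smul (a j) (a (I.+4 - j)) N =
          \sum_(1 <= j < I.+4) smul (a j) (a (I.+3 - j + 1)) N.
  by apply: eq_big_nat => j /andP[_ hj]; congr (smul _ (a _) N); lia.
congr (_ + _).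
have -> : \sum_(1 <= j < I.+1) ('C(N.+2 - (j + 2), I.+3.-1 - (j + 2)))%:R * a (j + 2)%N N =
   \sum_(1 <= j < I.+1) \sum_(0 <= k < I.+1 - j) ((-1) ^+ k * ('C(k + j - 1, j - 1))%:R
       * term (I - j - k) (I - j - k) (a (j + 2)) N).
  apply: eq_big_nat => j /andP[hj1 hj2]; rewrite addn2 -inner_id //; lia.
rewrite !subn1 !subSS !subn0 binS natrD; ring.
Qed.

Theorem theorem1 :
  [/\ a 1 = sadd (sXk 1 (smul (a 1) (a 1))) (sconst 1),
      a 1 0%N = 1,
      a 2 = sadd (sXk 1 (a 1)) (sscale 2 (sXk 1 (smul (a 1) (a 2))))
    & forall i : nat, (2 < i)%N ->
      a i = fun n =>
        term (i - 1) (i - 2) (a 1) n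
        + term (i - 2) (i - 3) (a 1) n
        + term (i - 2) (i - 3) (a 2) n
        + sXk 1 (fun m => \sum_(1 <= j < i - 2) \sum_(0 <= k < i - 2 - j)
              ((-1) ^+ k * ('C(k + j - 1, j - 1))%:R
               * term (i - 3 - j - k) (i - 3 - j - k) (a (j + 2)) m)) n
        + sXk 1 (fun m => \sum_(1 <= j < i.+1) smul (a j) (a (i - j + 1)) m) n].
Proof. split; [exact: part1 | exact: a10 | exact: part3 | exact: part4]. Qed.
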